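(* Let $\|\cdot\|_{Lo}$ be the Lorentz norm on $\mathbb{R}^p$ ($p\ge2$), with allowed sets all $S\subset\{1,\dots,p\}$ containing $p$ and associated norms $\Omega^{S^c}$ as in the context. Fix $J\subset\{1,\dots,p\}$ and let $g$ be the gauge norm described in the context. Then $g(\beta)=\|\beta\|_1$ for all $\beta\in\mathbb{R}^p$.
   Context: The Lorentz cone is $\mathcal{A}:=\{a\in\mathbb{R}^p: a_j>0\ \forall j,\ a_p\ge\|(a_1,\dots,a_{p-1})\|_2\}$ and $\|\beta\|_{Lo}:=\inf_{a\in\mathcal{A}}\frac12\sum_{i=1}^p\big(\beta_i^2/a_i+a_i\big)$. For $S\ni p$, $\mathcal{A}_{S^c}:=\{(a_j)_{j\in S^c}:a\in\mathcal{A}\}$, $\Omega^{S^c}(\beta_{S^c}):=\inf_{a\in\mathcal{A}_{S^c}}\frac12\sum_{j\in S^c}\big(\beta_j^2/a_j+a_j\big)$, and $\Upsilon_S(\beta):=\|\beta_S\|_{Lo}+\Omega^{S^c}(\beta_{S^c})$, where $\beta_S$ has entries $\beta_j1\{j\in S\}$. Let $\beta_{f(J)}:=\beta_J-\beta_{J^{c}}$, $\mathrm{flip}_J(B):=\{\beta_{f(J)}:\beta\in B\}$, $\overline{B}:=\bigcup_{S\text{ allowed}}\{\beta:\Upsilon_S(\beta)\le1\}$, $B_g:=\mathrm{Conv}(\overline{B}\cup\mathrm{flip}_J(\overline{B}))$, and $g(x):=\inf\{t>0:x\in tB_g\}$. *)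

(* Defs.v *)
From HB Require Import structures.
From mathcomp Require Import all_boot all_order all_algebra.
From mathcomp Require Import classical_sets boolp reals.
Set Implicit Arguments. Unset Strict Implicit. Unset Printing Implicit Defensive.
Import Order.TTheory GRing.Theory Num.Theory.
Local Open Scope ring_scope.
Local Open Scope classical_set_scope.

(* Coordinates {1,...,p} are indexed by 'I_p; the paper's coordinate p
   is the last index [ord_max] ('I_n.+1).  We work with p = n.+2 (p >= 2). *)

Section Defs.
Variables (R : realType) (n : nat).
Notation p := n.+2.
Notation vec := 'rV[R]_p.
Definition lst : 'I_p := ord_max.

Definition lorentz_cone : set vec :=
  [set a | (forall j, 0 < a 0 j) /\
           Num.sqrt (\sum_(j < p | j != lst) (a 0 j) ^+ 2) <= a 0 lst].

Definition lorentz_norm (b : vec) : R :=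
  inf [set x | exists2 a, lorentz_cone a &
        x = 2^-1 * \sum_(i < p) ((b 0 i) ^+ 2 / a 0 i + a 0 i)].

Definition omega_Sc (S : {set 'I_p}) (b : vec) : R :=
  inf [set x | exists2 a, lorentz_cone a &
        x = 2^-1 * \sum_(j < p | j \notin S) ((b 0 j) ^+ 2 / a 0 j + a 0 j)].

Definition restr (S : {set 'I_p}) (b : vec) : vec :=
  \row_j (if j \in S then b 0 j else 0).

Definition Upsilon (S : {set 'I_p}) (b : vec) : R :=
  lorentz_norm (restr S b) + omega_Sc S b.

Definition allowed (S : {set 'I_p}) : bool := lst \in S.

Definition Bbar : set vec :=
  [set b | exists2 S, allowed S & Upsilon S b <= 1].

Definition flipv (J : {set 'I_p}) (b : vec) : vec :=
  restr J b - restr (~: J) b.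

Definition conv_hull (A : set vec) : set vec :=
  [set x | exists m (w : 'I_m -> R) (v : 'I_m -> vec),
     [/\ forall i, 0 <= w i, \sum_(i < m) w i = 1, forall i, A (v i)
       & x = \sum_(i < m) w i *: v i]].

Definition Bg (J : {set 'I_p}) : set vec :=
  conv_hull (Bbar `|` (flipv J @` Bbar)).

Definition gauge (J : {set 'I_p}) (x : vec) : R :=
  inf [set t | 0 < t /\ exists2 y, Bg J y & x = t *: y].

Definition l1norm (b : vec) : R := \sum_(i < p) `|b 0 i|.

End Defs.

(* Main.v *)
Require Import Defs.
From HB Require Import structures.
From mathcomp Require Import all_boot all_order all_algebra.
From mathcomp Require Import classical_sets boolp reals.
From mathcomp Require Import ring lra.
Import Order.TTheory GRing.Theory Num.Theory.
Local Open Scope ring_scope.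
Local Open Scope classical_set_scope.

Section Aux.
Variables (R : realType) (n : nat).
Notation p := n.+2.
Notation vec := 'rV[R]_p.

Lemma term_ge (b a : R) : 0 < a -> 2 * `|b| <= b ^+ 2 / a + a.
Proof.
move=> a0.
have -> : b ^+ 2 / a + a = (b ^+ 2 + a * a) / a by by field; rewrite gt_eqF.
rewrite ler_pdivlMr // -real_normK ?num_real //.
have := sqr_ge0 (`|b| - a). nra.
Qed.

Lemma term_le (b a : R) : 0 < a -> `|b| <= a -> b ^+ 2 / a + a <= `|b| + a.
Proof.
move=> a0 ba; rewrite lerD2r ler_pdivrMr // -real_normK ?num_real //.
have := normr_ge0 b. nra.
Qed.


Definition mkcone (u : vec) : vec :=
  \row_j (if j == lst n then Num.sqrt (\sum_(k < p | k != lst n) (u 0 k) ^+ 2) + u 0 (lst n)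
          else u 0 j).

Lemma mkcone_cone (u : vec) : (forall j, 0 < u 0 j) -> lorentz_cone (mkcone u).
Proof.
move=> up; split.
  move=> j; rewrite mxE; case: eqP => _ //.
  by apply: ltr_wpDl; [exact: sqrtr_ge0|].
rewrite mxE eqxx.
rewrite (eq_bigr (fun k => (u 0 k) ^+ 2)); last by move=> k /negbTE kl; rewrite mxE kl.
by rewrite lerDl ltW.
Qed.

Lemma mkcone_le (u : vec) j :
  mkcone u 0 j <= u 0 j + Num.sqrt (\sum_(k < p | k != lst n) (u 0 k) ^+ 2).
Proof.
rewrite mxE; case: eqP => [->|_]; first by rewrite addrC.
by rewrite lerDl sqrtr_ge0.
Qed.

Lemma mkcone_off (u : vec) j : j != lst n -> mkcone u 0 j = u 0 j.
Proof. by move=> /negbTE h; rewrite mxE h. Qed.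

Definition one_row : vec := \row_j 1.

Lemma Lo_lb (b : vec) :
  lbound [set x | exists2 a, lorentz_cone a &
        x = 2^-1 * \sum_(i < p) ((b 0 i) ^+ 2 / a 0 i + a 0 i)] (\sum_(i < p) `|b 0 i|).
Proof.
move=> x [a [apos _] ->].
have : \sum_(i < p) (2 * `|b 0 i|) <= \sum_(i < p) ((b 0 i) ^+ 2 / a 0 i + a 0 i).
  by apply: ler_sum => i _; apply: term_ge.
rewrite -mulr_sumr => h.
have two0 : (2:R) != 0 by rewrite pnatr_eq0.
rewrite -[X in X <= _](mulKf two0).
by rewrite ler_pM2l ?invr_gt0.
Qed.

Lemma Om_lb (S : {set 'I_p}) (b : vec) :
  lbound [set x | exists2 a, lorentz_cone a &
        x = 2^-1 * \sum_(j < p | j \notin S) ((b 0 j) ^+ 2 / a 0 j + a 0 j)]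
        (\sum_(j < p | j \notin S) `|b 0 j|).
Proof.
move=> x [a [apos _] ->].
have : \sum_(j < p | j \notin S) (2 * `|b 0 j|) <= \sum_(j < p | j \notin S) ((b 0 j) ^+ 2 / a 0 j + a 0 j).
  by apply: ler_sum => i _; apply: term_ge.
rewrite -mulr_sumr => h.
have two0 : (2:R) != 0 by rewrite pnatr_eq0.
rewrite -[X in X <= _](mulKf two0).
by rewrite ler_pM2l ?invr_gt0.
Qed.


Lemma mkcone_ge (u : vec) j : (forall j, 0 < u 0 j) -> u 0 j <= mkcone u 0 j.
Proof.
move=> up; rewrite mxE; case: eqP => [->|_] //.
by rewrite lerDr sqrtr_ge0.
Qed.

Lemma sum_sub_le (P : pred 'I_p) (F : 'I_p -> R) :
  (forall i, 0 <= F i) -> \sum_(i < p | P i) F i <= \sum_(i < p) F i.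
Proof.
move=> F0; rewrite big_mkcond; apply: ler_sum => i _; case: ifP => //.
Qed.

Lemma Lo_ub (y : vec) :
  lorentz_norm (restr [set lst n]%SET y) <= \sum_(i < p) `|restr [set lst n]%SET y 0 i|.
Proof.
set r := restr [set lst n]%SET y.
apply/ler_addgt0Pr => e e0.
set P : R := p%:R.
have P1 : 1 <= P by rewrite /P ler1n.
have K0 : 0 < P * (1 + P) by apply: mulr_gt0; lra.
set c := e / (P * (1 + P)).
have c0 : 0 < c by rewrite /c divr_gt0.
have ceq : c * (P * (1 + P)) = e by rewrite /c divfK // gt_eqF.
clearbody c.
set u : vec := \row_j (`|r 0 j| + c).
have upos : forall j, 0 < u 0 j by move=> j; rewrite mxE ltr_wpDl.
set a := mkcone u.
have acone : lorentz_cone a by exact: mkcone_cone.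
set E := [set x | exists2 a, lorentz_cone a &
        x = 2^-1 * \sum_(i < p) ((r 0 i) ^+ 2 / a 0 i + a 0 i)].
have hlb : has_lbound E by exists (\sum_(i < p) `|r 0 i|); exact: Lo_lb.
have Ev : E (2^-1 * \sum_(i < p) ((r 0 i) ^+ 2 / a 0 i + a 0 i)) by exists a.
apply: le_trans (ge_inf hlb Ev) _.
set s := Num.sqrt (\sum_(k < p | k != lst n) (u 0 k) ^+ 2).
have sle : s <= c * P.
  rewrite /s.
  have -> : \sum_(k < p | k != lst n) (u 0 k) ^+ 2 = \sum_(k < p | k != lst n) c ^+ 2.
    apply: eq_bigr => k kl; rewrite /u /r /restr !mxE inE (negbTE kl) normr0 add0r //.
  have h1 : \sum_(k < p | k != lst n) c ^+ 2 <= (c * P) ^+ 2.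
    apply: le_trans (sum_sub_le _ _ _) _; first by move=> i; exact: sqr_ge0.
    rewrite sumr_const card_ord -mulr_natr -/P.
    rewrite exprMn [P ^+ 2]expr2 mulrA -[X in X <= _]mulr1 ler_wpM2l //.
    by apply: mulr_ge0; [exact: sqr_ge0| lra].
  apply: le_trans (_ : Num.sqrt ((c * P) ^+ 2) <= _).
    by rewrite ler_sqrt // sqr_ge0.
  by rewrite sqrtr_sqr ger0_norm // mulr_ge0 //; lra.
have term : forall i, (r 0 i) ^+ 2 / a 0 i + a 0 i <= 2 * `|r 0 i| + (c + s).
  move=> i.
  have ai : 0 < a 0 i by case: acone.
  have ui := mkcone_ge u i upos.
  have h2 := mkcone_le u i.
  have uval : u 0 i = `|r 0 i| + c by rewrite /u mxE.
  rewrite -/a -/s uval in h2 ui.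
  have hb : `|r 0 i| <= a 0 i by lra.
  have := term_le (r 0 i) (a 0 i) ai hb; lra.
have hsum : \sum_(i < p) ((r 0 i) ^+ 2 / a 0 i + a 0 i) <=
            2 * \sum_(i < p) `|r 0 i| + (c + s) * P.
  apply: le_trans (ler_sum _ (fun i _ => term i)) _.
  by rewrite big_split /= -mulr_sumr sumr_const card_ord -[(c + s) *+ p]mulr_natr.
have hcs : (c + s) * P <= e.
  rewrite -ceq; have : s * P <= c * P * P by rewrite ler_pM2r //; lra.
  nra.
lra.
Qed.


Lemma Om_ub (y : vec) :
  omega_Sc [set lst n]%SET y <= \sum_(j < p | j \notin [set lst n]%SET) `|y 0 j|.
Proof.
apply/ler_addgt0Pr => e e0.
set P : R := p%:R.
have P1 : 1 <= P by rewrite /P ler1n.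
set c := e / P.
have c0 : 0 < c by rewrite /c divr_gt0 //; lra.
have ceq : c * P = e by rewrite /c divfK // gt_eqF //; lra.
clearbody c.
set u : vec := \row_j (`|y 0 j| + c).
have upos : forall j, 0 < u 0 j by move=> j; rewrite mxE ltr_wpDl.
set a := mkcone u.
have acone : lorentz_cone a by exact: mkcone_cone.
set E := [set x | exists2 a, lorentz_cone a &
        x = 2^-1 * \sum_(j < p | j \notin [set lst n]%SET) ((y 0 j) ^+ 2 / a 0 j + a 0 j)].
have hlb : has_lbound E by exists (\sum_(j < p | j \notin [set lst n]%SET) `|y 0 j|); exact: (Om_lb [set lst n]%SET y).
have Ev : E (2^-1 * \sum_(j < p | j \notin [set lst n]%SET) ((y 0 j) ^+ 2 / a 0 j + a 0 j)) by exists a.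
apply: le_trans (ge_inf hlb Ev) _.
have term : forall j, j \notin [set lst n]%SET ->
   (y 0 j) ^+ 2 / a 0 j + a 0 j <= 2 * `|y 0 j| + c.
  move=> j; rewrite inE => jl.
  have aj : a 0 j = `|y 0 j| + c by rewrite /a mkcone_off // /u mxE.
  have ai : 0 < a 0 j by case: acone.
  have hb : `|y 0 j| <= a 0 j by rewrite aj; lra.
  have := term_le (y 0 j) (a 0 j) ai hb; lra.
have hsum : \sum_(j < p | j \notin [set lst n]%SET) ((y 0 j) ^+ 2 / a 0 j + a 0 j) <=
            2 * \sum_(j < p | j \notin [set lst n]%SET) `|y 0 j| + c * P.
  apply: le_trans (ler_sum _ term) _.
  rewrite big_split /= -mulr_sumr lerD2l.
  apply: le_trans (sum_sub_le _ _ _) _; first by move=> _; lra.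
  by rewrite sumr_const card_ord -[c *+ p]mulr_natr.
lra.
Qed.

Lemma Lo_ge (y : vec) :
  \sum_(i < p) `|y 0 i| <= lorentz_norm y.
Proof.
apply: lb_le_inf; last exact: (Lo_lb y).
exists (2^-1 * \sum_(i < p) ((y 0 i) ^+ 2 / mkcone one_row 0 i + mkcone one_row 0 i)).
by exists (mkcone one_row) => //; apply: mkcone_cone => j; rewrite mxE.
Qed.

Lemma Om_ge (S : {set 'I_p}) (y : vec) :
  \sum_(j < p | j \notin S) `|y 0 j| <= omega_Sc S y.
Proof.
apply: lb_le_inf; last exact: (Om_lb S y).
exists (2^-1 * \sum_(j < p | j \notin S) ((y 0 j) ^+ 2 / mkcone one_row 0 j + mkcone one_row 0 j)).
by exists (mkcone one_row) => //; apply: mkcone_cone => j; rewrite mxE.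
Qed.

Lemma sum_restr (S : {set 'I_p}) (y : vec) :
  \sum_(i < p) `|restr S y 0 i| = \sum_(i < p | i \in S) `|y 0 i|.
Proof.
rewrite [in RHS]big_mkcond; apply: eq_bigr => i _; rewrite mxE; case: ifP => //.
by rewrite normr0.
Qed.

Lemma l1_split (S : {set 'I_p}) (y : vec) :
  l1norm y = \sum_(i < p | i \in S) `|y 0 i| + \sum_(i < p | i \notin S) `|y 0 i|.
Proof. by rewrite /l1norm (bigID (fun i => i \in S)). Qed.

Lemma Ups_ge (S : {set 'I_p}) (y : vec) : l1norm y <= Upsilon S y.
Proof.
rewrite (l1_split S) /Upsilon -sum_restr.
by apply: lerD; [exact: Lo_ge | exact: Om_ge].
Qed.

Lemma Ups_le (y : vec) : Upsilon [set lst n]%SET y <= l1norm y.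
Proof.
rewrite (l1_split [set lst n]%SET) /Upsilon -sum_restr.
by apply: lerD; [exact: Lo_ub | exact: Om_ub].
Qed.

Lemma l1_ge0 (y : vec) : 0 <= l1norm y.
Proof. by apply: sumr_ge0 => i _. Qed.

Lemma l1_scale (t : R) (y : vec) : 0 <= t -> l1norm (t *: y) = t * l1norm y.
Proof.
move=> t0; rewrite /l1norm mulr_sumr; apply: eq_bigr => i _.
by rewrite mxE normrM ger0_norm.
Qed.

Lemma l1_flip (J : {set 'I_p}) (y : vec) : l1norm (flipv J y) = l1norm y.
Proof.
rewrite /l1norm; apply: eq_bigr => i _.
rewrite /flipv /restr !mxE inE; case: (i \in J) => /=.
  by rewrite subr0.
by rewrite sub0r normrN.
Qed.

Lemma l1_conv (m : nat) (w : 'I_m -> R) (v : 'I_m -> vec) :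
  (forall i, 0 <= w i) ->
  l1norm (\sum_(i < m) w i *: v i) <= \sum_(i < m) w i * l1norm (v i).
Proof.
move=> w0; rewrite /l1norm.
under eq_bigr => j _ do rewrite summxE.
apply: le_trans (ler_sum _ (fun j _ => ler_norm_sum _ _ _)) _.
rewrite exchange_big /=; apply: ler_sum => i _.
rewrite mulr_sumr; apply: ler_sum => j _.
by rewrite mxE normrM ger0_norm.
Qed.

Lemma Bg_l1 (J : {set 'I_p}) (y : vec) : Bg J y -> l1norm y <= 1.
Proof.
move=> [m [w [v [w0 w1 vA ->]]]].
apply: le_trans (l1_conv m w v w0) _.
rewrite -w1; apply: ler_sum => i _.
rewrite -[X in _ <= X]mulr1 ler_wpM2l //.
case: (vA i) => [[S _ hS]|[z [S _ hS] <-]].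
  exact: le_trans (Ups_ge S _) hS.
rewrite l1_flip; exact: le_trans (Ups_ge S _) hS.
Qed.

Lemma Bg_mem (J : {set 'I_p}) (y : vec) : l1norm y <= 1 -> Bg J y.
Proof.
move=> hy.
exists 1%N, (fun _ => 1), (fun _ => y); split.
- by move=> _; exact: ler01.
- by rewrite big_ord1.
- move=> _; left; exists [set lst n]%SET; first by rewrite /allowed inE.
  exact: le_trans (Ups_le y) hy.
- by rewrite big_ord1 scale1r.
Qed.

Lemma gauge_mem (J : {set 'I_p}) (b : vec) (t : R) :
  l1norm b < t ->
  [set t | 0 < t /\ exists2 y, Bg J y & b = t *: y] t.
Proof.
move=> bt.
have t0 : 0 < t by apply: le_lt_trans (l1_ge0 b) bt.
split => //; exists (t^-1 *: b).
  apply: Bg_mem; rewrite l1_scale ?invr_ge0 ?ltW //.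
  have tn0 : t != 0 by rewrite gt_eqF.
  rewrite -(mulVf tn0).
  by rewrite ltr_pM2l ?invr_gt0.
by rewrite scalerA mulfV ?gt_eqF // scale1r.
Qed.

End Aux.

Theorem lemma12 (R : realType) (n : nat) (J : {set 'I_n.+2}) (b : 'rV[R]_n.+2) :
  gauge J b = l1norm b.
Proof.
apply/eqP; rewrite eq_le; apply/andP; split.
  apply/ler_addgt0Pr => e e0.
  have hlb : has_lbound [set t | 0 < t /\ exists2 y, Bg J y & b = t *: y].
    by exists 0 => x [x0 _]; exact: ltW.
  apply: (ge_inf hlb); apply: gauge_mem; rewrite ltrDl //.
apply: lb_le_inf.
  exists (l1norm b + 1); apply: gauge_mem; rewrite ltrDl //.
move=> t [t0 [y /Bg_l1 hy ->]].
rewrite l1_scale; last exact: ltW.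
by rewrite -[X in _ <= X]mulr1 ler_wpM2l // ltW.
Qed.
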